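(* Let $(G,S,T,k,\ell)$ be an instance of \textsc{Token Sliding Optimization} and let $V(G)=H\cup M$ be a partition such that $G[H]$ has maximum degree at most $\Delta$. Let $\sigma$ be a reconfiguration sequence from $S$ to $T$ of length at most $\ell$, let $V(\sigma)$ be the set of vertices touched by $\sigma$, and let $\chi:H\to\{\mathcal{R},\mathcal{B}\}$ be a coloring that is successful for $\sigma$. Let $H_{\mathcal{R}}=\chi^{-1}(\mathcal{R})$. Then $V(\sigma)$ has non-empty intersection with at most $2\ell$ connected components of $G[H_{\mathcal{R}}]$, and each connected component of $G[H_{\mathcal{R}}]$ that intersects $V(\sigma)$ has at most $2\ell$ vertices.
   Context: An instance $(G,S,T,k,\ell)$ of \textsc{Token Sliding Optimization}: $G$ a simple graph, $S,T$ independent sets of size $k$, $\ell\ge1$. A reconfiguration sequence of length $m$ from $S$ to $T$ is a sequence $S=I_0,\dots,I_m=T$ of independent sets of size $k$ with each $I_{j+1}=(I_j\setminus\{u\})\cup\{v\}$ for some $u\in I_j$, $v\notin I_j$, $\{u,v\}\in E(G)$ (a token slides from $u$ to $v$). A vertex is touched by $\sigma$ if at some step a token slides from it to a neighbor or from a neighbor to it. For $Y\subseteq H$, $N_H(Y)=\{v\in H\setminus Y: v\text{ adjacent to some vertex of }Y\}$. The coloring $\chi$ is successful if every vertex of $V(\sigma)\cap H$ is colored $\mathcal{R}$ and every vertex of $N_H(V(\sigma)\cap H)$ is colored $\mathcal{B}$. *)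

(* Defs.v *)
From mathcomp Require Import all_boot.
Set Implicit Arguments. Unset Strict Implicit. Unset Printing Implicit Defensive.

Section Defs.
Variable V : finType.
Variable g : rel V.

Definition simple_graph := symmetric g /\ irreflexive g.

Definition independent (I : {set V}) : bool :=
  [forall x in I, forall y in I, ~~ g x y].

Definition slide_step (I J : {set V}) (u v : V) : bool :=
  [&& u \in I, v \notin I, g u v & J == v |: (I :\ u)].

(* s = [:: I_1; ...; I_m] : reconfiguration sequence S = I_0, I_1, ..., I_m = T
   of length m = size s *)
Definition reconf_seq (k : nat) (S T : {set V}) (s : seq {set V}) : bool :=
  [&& all (fun I => independent I && (#|I| == k)) (S :: s),
      all (fun p => [exists u, exists v, slide_step p.1 p.2 u v]) (zip (S :: s) s)
    & last S s == T].

Definition touched (S : {set V}) (s : seq {set V}) : {set V} :=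
  [set x | has (fun p => [exists u, exists v,
              slide_step p.1 p.2 u v && ((x == u) || (x == v))]) (zip (S :: s) s)].

Definition nbhd_in (H Y : {set V}) : {set V} :=
  [set v in H :\: Y | [exists y in Y, g v y]].

(* chi : V -> bool, true = R (red), false = B (blue); only values on H matter *)
Definition successful (H : {set V}) (chi : V -> bool) (Vs : {set V}) : Prop :=
  (forall x, x \in Vs :&: H -> chi x = true) /\
  (forall x, x \in nbhd_in H (Vs :&: H) -> chi x = false).

Definition max_deg_le (H : {set V}) (D : nat) : Prop :=
  forall x, x \in H -> #|[set y in H | g x y]| <= D.

Definition induced (A : {set V}) : rel V := fun x y => [&& x \in A, y \in A & g x y].

Definition component (A : {set V}) (x : V) : {set V} :=
  [set y | connect (induced A) x y].

Definition components (A : {set V}) : {set {set V}} :=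
  [set component A x | x in A].

End Defs.

(* Main.v *)
Require Import Defs.
From mathcomp Require Import all_boot.

Section Aux.
Variable V : finType.
Variable g : rel V.

Lemma step_card (I J : {set V}) :
  #|[set x | [exists u, exists v, slide_step g I J u v && ((x == u) || (x == v))]]| <= 2.
Proof.
case: (boolP [exists u, exists v, slide_step g I J u v]) => [/existsP[u0 /existsP[v0 st0]]|none].
  apply: leq_trans (_ : #|[set u0; v0]| <= 2); last first.
    by rewrite cards2; case: (u0 == v0).
  apply: subset_leq_card; apply/subsetP => x; rewrite inE => /existsP[u /existsP[v /andP[st xe]]].
  move: st0 st => /and4P[u0I v0I _ /eqP J0] /and4P[uI vI _ /eqP J1].
  have uu : u = u0.
    apply/eqP; apply/negPn/negP => ne.
    have : u0 \in J by rewrite J1 !inE (eq_sym u0 u) ne u0I orbT.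
    rewrite J0 !inE eqxx /= orbF => /eqP e.
    by move: v0I; rewrite -e u0I.
  have vv : v = v0.
    have : v \in J by rewrite J1 !inE eqxx.
    rewrite J0 !inE => /orP[/eqP //|/andP[_ vI']].
    by move: vI; rewrite vI'.
  by rewrite !inE -uu -vv.
apply: leq_trans (_ : #|(set0 : {set V})| <= 2); last by rewrite cards0.
apply: subset_leq_card; apply/subsetP => x; rewrite inE => /existsP[u /existsP[v /andP[st _]]].
by case/negP: none; apply/existsP; exists u; apply/existsP; exists v.
Qed.

Lemma touched_card (S : {set V}) (r : seq ({set V} * {set V})) :
  #|[set x | has (fun p => [exists u, exists v,
              slide_step g p.1 p.2 u v && ((x == u) || (x == v))]) r]| <= 2 * size r.
Proof.
elim: r => [|p r IH].
  apply: leq_trans (_ : #|(set0 : {set V})| <= 0); last by rewrite cards0.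
  by apply: subset_leq_card; apply/subsetP => x; rewrite inE.
have -> : [set x | has (fun p => [exists u, exists v,
              slide_step g p.1 p.2 u v && ((x == u) || (x == v))]) (p :: r)] =
  [set x | [exists u, exists v, slide_step g p.1 p.2 u v && ((x == u) || (x == v))]] :|:
  [set x | has (fun p => [exists u, exists v,
              slide_step g p.1 p.2 u v && ((x == u) || (x == v))]) r].
  by apply/setP => x; rewrite !inE.
apply: leq_trans (leq_card_setU _ _) _.
rewrite /= mulnS; apply: leq_add => //; exact: step_card.
Qed.

End Aux.

Theorem lemma4p1 (V : finType) (g : rel V) (S T : {set V}) (k l : nat)
    (H M : {set V}) (D : nat) (s : seq {set V}) (chi : V -> bool) :
  simple_graph g ->
  independent g S -> independent g T -> #|S| = k -> #|T| = k -> 1 <= l ->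
  H :&: M = set0 -> H :|: M = [set: V] ->
  max_deg_le g H D ->
  reconf_seq g k S T s -> size s <= l ->
  successful g H chi (touched g S s) ->
  let HR := [set x in H | chi x] in
  #|[set C in components g HR | C :&: touched g S s != set0]| <= 2 * l /\
  (forall C, C \in components g HR -> C :&: touched g S s != set0 ->
     #|C| <= 2 * l).
Proof.
move=> [gsym girr] _ _ _ _ _ _ _ _ _ sl [succR succB] HR.
set Tc := touched g S s.
have cardT : #|Tc| <= 2 * l.
  apply: leq_trans (_ : #|Tc| <= 2 * size (zip (S :: s) s)) _; first by have := @touched_card V g S (zip (S :: s) s); rewrite /Tc /touched.
  by rewrite size_zip /= (minn_idPr (leqnSn _)) leq_mul2l sl orbT.
have isym : symmetric (induced g HR).
  by move=> x y; rewrite /induced gsym andbCA.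
have csym := sym_connect_sym isym.
have key : forall a b, a \in Tc -> b \in HR -> a \in HR -> g b a -> b \in Tc.
  move=> a b aT bR aR gba; apply/negPn/negP => bT.
  move: bR aR; rewrite !inE => /andP[bH cb] /andP[aH _].
  have : chi b = false.
    apply: succB; rewrite /nbhd_in inE !in_setD !in_setI (negbTE bT) bH /=.
    by apply/existsP; exists a; rewrite in_setI aT aH gba.
  by rewrite cb.
have cl : closed (induced g HR) Tc.
  move=> a b /and3P[aR bR gab]; apply/idP/idP => [aT|bT].
    by apply: (key a) => //; rewrite gsym.
  exact: (key b).
have compE : forall C, C \in components g HR -> C :&: Tc != set0 ->
   exists2 z, z \in Tc & C = component g HR z.
  move=> C /imsetP[y yR ->] /set0Pn[z]; rewrite in_setI inE => /andP[yz zT].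
  exists z => //; apply/setP => w; rewrite !inE; exact: same_connect.
split.
  apply: leq_trans cardT; apply: leq_trans (leq_imset_card (component g HR) (mem Tc)).
  apply: subset_leq_card; apply/subsetP => C; rewrite inE => /andP[Cc Cn].
  by have [z zT ->] := compE C Cc Cn; apply: imset_f.
move=> C Cc Cn; have [z zT CE] := compE C Cc Cn.
apply: leq_trans cardT; apply: subset_leq_card; apply/subsetP => w.
rewrite CE inE => zw; by rewrite -(closed_connect cl zw).
Qed.
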